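(* Let $c\geq 0$ and let $n>c$ be a real number. For $k\in\mathbb{N}_0$ and $x\geq 0$ let $$p_{n,k}^{[c]}(x)=(-1)^k\binom{-n/c}{k}(cx)^k(1+cx)^{-\frac{n}{c}-k}\ \text{ if } c>0,\qquad p_{n,k}^{[0]}(x)=\frac{(nx)^k}{k!}e^{-nx}.$$ Then the Shannon entropy $$H_{n,c}(x)=-\sum_{k=0}^\infty p_{n,k}^{[c]}(x)\log p_{n,k}^{[c]}(x)$$ is concave and increasing on $[0,+\infty)$.
   Context: For $\alpha\in\mathbb{R}$ and $k\in\mathbb{N}$, $\binom{\alpha}{k}=\frac{\alpha(\alpha-1)\cdots(\alpha-k+1)}{k!}$ and $\binom{\alpha}{0}=1$. For each $x\geq0$, $(p_{n,k}^{[c]}(x))_{k\geq 0}$ is a probability distribution (negative binomial type for $c>0$, Poisson for $c=0$), with the convention $0\log 0=0$. *)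

(* Defs.v *)
From Stdlib Require Import Reals Factorial.
From Coquelicot Require Import Coquelicot.
Open Scope R_scope.

Fixpoint falling (a : R) (k : nat) : R :=
  match k with
  | O => 1
  | S k' => falling a k' * (a - INR k')
  end.

Definition gbinom (a : R) (k : nat) : R := falling a k / INR (Factorial.fact k).

Definition p_nk (c n : R) (k : nat) (x : R) : R :=
  if Rlt_dec 0 c then
    (-1) ^ k * gbinom (- n / c) k * (c * x) ^ k
      * Rpower (1 + c * x) (- n / c - INR k)
  else
    (n * x) ^ k / INR (Factorial.fact k) * exp (- n * x).

Definition xlogx (t : R) : R := if Rle_dec t 0 then 0 else t * ln t.

Definition ent_term (c n x : R) (k : nat) : R := - xlogx (p_nk c n k x).
Definition H_ent (c n x : R) : R := Series (ent_term c n x).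

(* Main.v *)
Require Import Defs.
From Stdlib Require Import Reals.
From Coquelicot Require Import Coquelicot.
From Stdlib Require Import Lra Lia Psatz Factorial.
Open Scope R_scope.

Definition rc0 (f : R -> R) := forall eps, 0 < eps -> exists d, 0 < d /\
  forall x, 0 <= x < d -> Rabs (f x - f 0) < eps.

Lemma cont_eps (f : R -> R) x : continuity_pt f x -> forall eps, 0 < eps ->
  exists d, 0 < d /\ forall y, Rabs (y - x) < d -> Rabs (f y - f x) < eps.
Proof.
  intros H eps He. destruct (H eps He) as [d [Hd Hy]].
  exists d; split; auto. intros y Hyx.
  destruct (Req_dec y x) as [->|Hne].
  - rewrite Rminus_eq_0, Rabs_R0; auto.
  - apply (Hy y). split; [unfold D_x, no_cond; split; auto | exact Hyx].
Qed.

Lemma conc_incr (f df ddf : R -> R) :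
  (forall x, 0 < x -> derivable_pt_lim f x (df x)) ->
  (forall x, 0 < x -> derivable_pt_lim df x (ddf x)) ->
  (forall x, 0 < x -> ddf x <= 0) ->
  (forall x, 0 < x -> 0 < df x) ->
  rc0 f ->
  (forall x y t, 0 <= x -> 0 <= y -> 0 <= t <= 1 ->
     t * f x + (1 - t) * f y <= f (t * x + (1 - t) * y)) /\
  (forall x y, 0 <= x -> x < y -> f x < f y).
Proof.
  intros Hf Hdf Hdd Hdpos Hrc.
  assert (Hdec : forall x y, 0 < x -> x < y -> df y <= df x).
  { intros x y Hx Hxy. destruct (MVT_cor2 df ddf x y Hxy) as [c [Hc1 Hc2]].
    - intros c Hc; apply Hdf; lra.
    - assert (ddf c <= 0) by (apply Hdd; lra). nra. }
  assert (Hinc : forall x y, 0 < x -> x < y -> f x < f y).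
  { intros x y Hx Hxy. destruct (MVT_cor2 f df x y Hxy) as [c [Hc1 Hc2]].
    - intros c Hc; apply Hf; lra.
    - assert (0 < df c) by (apply Hdpos; lra). nra. }
  assert (Hcont : forall x, 0 < x -> continuity_pt f x).
  { intros x Hx. apply derivable_continuous_pt. exists (df x). apply Hf; auto. }
  assert (Hc0 : forall x y t, 0 < x -> x < y -> 0 < t < 1 ->
     t * f x + (1 - t) * f y <= f (t * x + (1 - t) * y)).
  { intros x y t Hx Hxy Ht. set (z := t * x + (1 - t) * y).
    assert (Hz1 : x < z) by (unfold z; nra). assert (Hz2 : z < y) by (unfold z; nra).
    destruct (MVT_cor2 f df x z Hz1) as [c1 [E1 Hc1]].
    { intros c Hc; apply Hf; lra. }
    destruct (MVT_cor2 f df z y Hz2) as [c2 [E2 Hc2]].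
    { intros c Hc; apply Hf; lra. }
    assert (df c2 <= df c1) by (apply Hdec; lra).
    assert (Ez1 : z - x = (1 - t) * (y - x)) by (unfold z; ring).
    assert (Ez2 : y - z = t * (y - x)) by (unfold z; ring).
    rewrite Ez1 in E1. rewrite Ez2 in E2.
    assert (0 <= t * (1 - t) * (y - x) * (df c1 - df c2)).
    { apply Rmult_le_pos; [|lra]. apply Rmult_le_pos; [|lra]. nra. }
    nra. }
  assert (Hcp : forall x y t, 0 < x -> 0 < y -> 0 <= t <= 1 ->
     t * f x + (1 - t) * f y <= f (t * x + (1 - t) * y)).
  { intros x y t Hx Hy Ht.
    destruct (Req_dec t 0) as [->|Ht0].
    { replace (0 * x + (1 - 0) * y) with y by ring. lra. }
    destruct (Req_dec t 1) as [->|Ht1].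
    { replace (1 * x + (1 - 1) * y) with x by ring. lra. }
    destruct (Rtotal_order x y) as [Hxy|[<-|Hxy]].
    - apply Hc0; lra.
    - replace (t * x + (1 - t) * x) with x by ring. lra.
    - replace (t * x + (1 - t) * y) with ((1 - t) * y + (1 - (1 - t)) * x) by ring.
      replace (t * f x + (1 - t) * f y) with ((1 - t) * f y + (1 - (1 - t)) * f x) by ring.
      apply Hc0; lra. }
  assert (Hz : forall y t, 0 < y -> 0 <= t <= 1 ->
     t * f 0 + (1 - t) * f y <= f (t * 0 + (1 - t) * y)).
  { intros y t Hy Ht.
    destruct (Req_dec t 1) as [->|Ht1].
    { replace (1 * 0 + (1 - 1) * y) with 0 by ring. lra. }
    set (z0 := t * 0 + (1 - t) * y).
    assert (Hz0 : 0 < z0) by (unfold z0; nra).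
    destruct (Rle_or_lt (t * f 0 + (1 - t) * f y) (f z0)) as [H|H]; auto.
    exfalso. set (g := t * f 0 + (1 - t) * f y - f z0).
    assert (Hg : 0 < g) by (unfold g; lra).
    destruct (Hrc (g/2) ltac:(lra)) as [d1 [Hd1p Hd1]].
    destruct (cont_eps f z0 (Hcont z0 Hz0) (g/2) ltac:(lra)) as [d2 [Hd2p Hd2]].
    set (e := Rmin (d1/2) (Rmin (d2/2) (y/2))).
    assert (He : 0 < e) by (unfold e; repeat apply Rmin_glb_lt; lra).
    assert (He1 : e < d1) by (unfold e; pose proof (Rmin_l (d1/2) (Rmin (d2/2) (y/2))); lra).
    assert (He2 : e <= d2/2) by (unfold e; pose proof (Rmin_r (d1/2) (Rmin (d2/2) (y/2))); pose proof (Rmin_l (d2/2) (y/2)); lra).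
    assert (He3 : e <= y/2) by (unfold e; pose proof (Rmin_r (d1/2) (Rmin (d2/2) (y/2))); pose proof (Rmin_r (d2/2) (y/2)); lra).
    pose proof (Hcp e y t He Hy Ht) as Hce.
    specialize (Hd1 e ltac:(lra)).
    specialize (Hd2 (t * e + (1 - t) * y)).
    assert (Rabs (t * e + (1 - t) * y - z0) < d2).
    { unfold z0. replace (t * e + (1 - t) * y - (t * 0 + (1 - t) * y)) with (t * e) by ring.
      rewrite Rabs_pos_eq by nra. nra. }
    specialize (Hd2 H0).
    apply Rabs_def2 in Hd1. apply Rabs_def2 in Hd2.
    assert (t * f 0 <= t * f e + g / 2).
    { assert (t * (f 0 - f e) <= t * (g/2)) by (apply Rmult_le_compat_l; lra). nra. }
    unfold g in *. lra. }
  split.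
  - intros x y t Hx Hy Ht.
    destruct (Rle_lt_or_eq_dec 0 x Hx) as [Hx'|<-];
    destruct (Rle_lt_or_eq_dec 0 y Hy) as [Hy'|<-].
    + apply Hcp; auto.
    + replace (t * x + (1 - t) * 0) with ((1 - t) * 0 + (1 - (1 - t)) * x) by ring.
      replace (t * f x + (1 - t) * f 0) with ((1 - t) * f 0 + (1 - (1 - t)) * f x) by ring.
      apply Hz; auto; lra.
    + apply Hz; auto.
    + replace (t * 0 + (1 - t) * 0) with 0 by ring. lra.
  - intros x y Hx Hxy.
    destruct (Rle_lt_or_eq_dec 0 x Hx) as [Hx'|<-]; [apply Hinc; auto|].
    assert (f 0 <= f (y/2)).
    { destruct (Rle_or_lt (f 0) (f (y/2))) as [H|H]; auto. exfalso.
      destruct (Hrc (f 0 - f (y/2)) ltac:(lra)) as [d [Hd Hd']].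
      set (e := Rmin (d/2) (y/4)).
      assert (0 < e) by (unfold e; apply Rmin_glb_lt; lra).
      assert (e <= d/2) by apply Rmin_l. assert (e <= y/4) by apply Rmin_r.
      specialize (Hd' e ltac:(lra)). apply Rabs_def2 in Hd'.
      assert (f e < f (y/2)) by (apply Hinc; lra). lra. }
    assert (f (y/2) < f y) by (apply Hinc; lra). lra.
Qed.


Lemma term_le_Series (b : nat -> R) n : (forall k, 0 <= b k) -> ex_series b -> b n <= Series b.
Proof.
  intros Hp Hb.
  assert (Hs : is_series b (Series b)) by (apply Series_correct; auto).
  apply is_series_Reals in Hs.
  assert (Hg : Un_growing (sum_f_R0 b)).
  { intros m. simpl. specialize (Hp (S m)). lra. }
  pose proof (growing_ineq _ _ Hg Hs n).
  destruct n; simpl in *; auto.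
  assert (0 <= sum_f_R0 b n) by (apply cond_pos_sum; auto). lra.
Qed.

Lemma rad_ge (a b : nat -> R) x : (forall n, Rabs (a n) <= Rabs (b n)) -> CV_disk b x ->
  Rbar_le (Rabs x) (CV_radius a).
Proof.
  intros Hab Hb. destruct (CV_radius_bounded a) as [Hub _]. apply Hub.
  exists (Series (fun n => Rabs (b n * x ^ n))). intros n.
  eapply Rle_trans; [| apply (term_le_Series (fun n => Rabs (b n * x ^ n)) n)].
  - rewrite !Rabs_mult, <- !RPow_abs, ?Rabs_Rabsolu.
    apply Rmult_le_compat_r; [apply pow_le, Rabs_pos | auto].
  - intros; apply Rabs_pos.
  - exact Hb.
Qed.

Lemma rad_gt (a b : nat -> R) x y : (forall n, Rabs (a n) <= Rabs (b n)) -> CV_disk b y ->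
  Rabs x < Rabs y -> Rbar_lt (Rabs x) (CV_radius a).
Proof.
  intros Hab Hb Hxy. eapply Rbar_lt_le_trans; [| apply (rad_ge a b y Hab Hb)]. simpl; auto.
Qed.

Lemma ex_ps (a : nat -> R) x : Rbar_lt (Rabs x) (CV_radius a) -> ex_series (fun k => a k * x ^ k).
Proof.
  intros H. destruct (CV_radius_inside a x H) as [l Hl]. exists l. apply is_pseries_R. exact Hl.
Qed.

Lemma lim_inv_S : is_lim_seq (fun k => / (INR k + 1)) 0.
Proof.
  assert (H : is_lim_seq (fun k => INR k + 1) p_infty).
  { apply is_lim_seq_ext with (fun k => INR (S k)). { intros; rewrite S_INR; auto. }
    apply (is_lim_seq_incr_1 INR p_infty). apply is_lim_seq_INR. }
  apply (is_lim_seq_inv _ _ H). discriminate.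
Qed.

Lemma lim_ratio a : is_lim_seq (fun k => (a + INR k) / (INR k + 1)) 1.
Proof.
  apply is_lim_seq_ext with (fun k => 1 + (a - 1) * / (INR k + 1)).
  { intros k. pose proof (pos_INR k). field. lra. }
  replace (Finite 1) with (Finite (1 + (a - 1) * 0)) by (f_equal; ring).
  apply is_lim_seq_plus'. apply is_lim_seq_const.
  apply is_lim_seq_mult'. apply is_lim_seq_const. apply lim_inv_S.
Qed.

Definition qb (g : nat -> R) := exists C, forall k, Rabs (g k) <= C * (INR k + 1) ^ 2.

Lemma qb_C g : qb g -> exists C, 0 <= C /\ forall k, Rabs (g k) <= C * (INR k + 1) ^ 2.
Proof.
  intros [C HC]. exists C. split; auto.
  specialize (HC 0%nat). simpl in HC. pose proof (Rabs_pos (g 0%nat)). lra.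
Qed.

Lemma qb_const a : qb (fun _ => a).
Proof.
  exists (Rabs a). intros k. pose proof (pos_INR k). pose proof (Rabs_pos a).
  assert (1 <= (INR k + 1) ^ 2) by nra. nra.
Qed.

Lemma qb_INR : qb INR.
Proof.
  exists 1. intros k. pose proof (pos_INR k). rewrite Rabs_pos_eq by lra. nra.
Qed.

Lemma qb_plus g h : qb g -> qb h -> qb (fun k => g k + h k).
Proof.
  intros [C1 H1] [C2 H2]. exists (C1 + C2). intros k.
  eapply Rle_trans; [apply Rabs_triang|]. specialize (H1 k); specialize (H2 k). lra.
Qed.

Lemma qb_scal a g : qb g -> qb (fun k => a * g k).
Proof.
  intros [C H]. exists (Rabs a * C). intros k. rewrite Rabs_mult.
  rewrite Rmult_assoc. apply Rmult_le_compat_l; [apply Rabs_pos | auto].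
Qed.

Lemma qb_ext g h : (forall k, g k = h k) -> qb g -> qb h.
Proof. intros E [C H]. exists C. intros k. rewrite <- E. auto. Qed.

Lemma qb_shift g : qb g -> qb (fun k => g (S k)).
Proof.
  intros Hg. destruct (qb_C g Hg) as [C [HC0 HC]]. exists (4 * C). intros k.
  eapply Rle_trans; [apply HC|]. rewrite S_INR. pose proof (pos_INR k).
  assert ((INR k + 1 + 1) ^ 2 <= 4 * (INR k + 1) ^ 2) by nra. nra.
Qed.

Lemma qb_diff g : qb g -> qb (fun k => g (S k) - g k).
Proof.
  intros Hg. apply (qb_ext (fun k => g (S k) + (-1) * g k)). { intros; ring. }
  apply qb_plus. apply qb_shift; auto. apply qb_scal; auto.
Qed.

Lemma qb_bounded g M : (forall k, Rabs (g k) <= M) -> qb g.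
Proof.
  intros H. exists M. intros k. pose proof (pos_INR k). specialize (H k).
  pose proof (Rabs_pos (g k)).
  assert (1 <= (INR k + 1) ^ 2) by nra. nra.
Qed.


Fixpoint rising (s : R) (k : nat) : R :=
  match k with O => 1 | S k' => rising s k' * (s + INR k') end.
Definition bb (s : R) (k : nat) : R := rising s k / INR (fact k).

Lemma fact_pos k : 0 < INR (fact k).
Proof. apply lt_0_INR, lt_O_fact. Qed.

Lemma rising_pos s k : 0 < s -> 0 < rising s k.
Proof. intros Hs; induction k; simpl; [lra|]. pose proof (pos_INR k). nra. Qed.

Lemma bb_pos s k : 0 < s -> 0 < bb s k.
Proof. intros; unfold bb. apply Rdiv_lt_0_compat; [apply rising_pos; auto | apply fact_pos]. Qed.

Lemma bb_0 s : bb s 0 = 1.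
Proof. unfold bb; simpl. field. Qed.

Lemma bb_S s k : bb s (S k) = bb s k * (s + INR k) / (INR k + 1).
Proof.
  unfold bb. change (fact (S k)) with (S k * fact k)%nat. rewrite mult_INR, S_INR.
  simpl rising. pose proof (fact_pos k). pose proof (pos_INR k). field. lra.
Qed.

Lemma rising_shift s k : rising s (S k) = s * rising (s + 1) k.
Proof.
  induction k. { simpl. ring. }
  change (rising s (S (S k))) with (rising s (S k) * (s + INR (S k))).
  rewrite IHk. simpl. destruct k; simpl; ring.
Qed.

Lemma bb_shift s k : (INR k + 1) * bb s (S k) = s * bb (s + 1) k.
Proof.
  unfold bb. rewrite rising_shift.
  change (fact (S k)) with (S k * fact k)%nat. rewrite mult_INR, S_INR.
  pose proof (fact_pos k). pose proof (pos_INR k). field. lra.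
Qed.

Lemma bb_pascal s k : bb s (S k) = bb (s + 1) (S k) - bb (s + 1) k.
Proof.
  pose proof (bb_shift s k). rewrite (bb_S (s + 1) k). pose proof (pos_INR k).
  apply Rmult_eq_reg_l with (INR k + 1); [|lra].
  rewrite H. field. lra.
Qed.

Lemma nb_rad s g q : 0 < s -> qb g -> Rabs q < 1 ->
  Rbar_lt (Rabs q) (CV_radius (fun k => bb s k * g k)).
Proof.
  intros Hs Hg Hq. destruct (qb_C g Hg) as [C [HC0 HC]].
  set (M := fun k => bb s k * (INR k + 1) ^ 2).
  apply (rad_gt _ (PS_scal (C + 1) M) q ((Rabs q + 1) / 2)).
  - intros n. unfold PS_scal. change (scal (C + 1) (M n)) with ((C + 1) * M n). unfold M.
    pose proof (bb_pos s n Hs). pose proof (pos_INR n).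
    rewrite Rabs_mult, (Rabs_pos_eq (bb s n)) by lra.
    assert (0 <= (INR n + 1) ^ 2) by (apply pow_le; lra).
    rewrite (Rabs_pos_eq ((C + 1) * (bb s n * (INR n + 1) ^ 2))) by
      (apply Rmult_le_pos; [lra| apply Rmult_le_pos; lra]).
    specialize (HC n). nra.
  - apply CV_disk_scal. apply CV_disk_DAlembert with 1.
    + intros n; unfold M. pose proof (bb_pos s n Hs). pose proof (pos_INR n).
      apply Rmult_integral_contrapositive; split; [lra|]. apply pow_nonzero; lra.
    + apply is_lim_seq_ext with (fun n => (s + INR n) / (INR n + 1) *
          (((2 + INR n) / (INR n + 1)) * ((2 + INR n) / (INR n + 1)))).
      { intros n. unfold M. rewrite bb_S, S_INR. pose proof (bb_pos s n Hs). pose proof (pos_INR n).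
        rewrite Rabs_pos_eq.
        - field. split; lra.
        - apply Rle_mult_inv_pos. apply Rmult_le_pos. apply Rle_mult_inv_pos; [nra|lra].
          apply pow_le; lra. apply Rmult_lt_0_compat; [lra| apply pow_lt; lra]. }
      replace (Finite 1) with (Finite (1 * (1 * 1))) by (f_equal; ring).
      apply is_lim_seq_mult'. apply lim_ratio. apply is_lim_seq_mult'; apply lim_ratio.
    + right. split. lra. rewrite Rinv_1.
      rewrite Rabs_pos_eq. lra. pose proof (Rabs_pos q). lra.
  - rewrite (Rabs_pos_eq ((Rabs q + 1) / 2)). lra. pose proof (Rabs_pos q). lra.
Qed.


Definition qq (u : R) : R := u / (1 + u).
Definition FF (s : R) (g : nat -> R) (u : R) : R :=
  Rpower (1 + u) (- s) * PSeries (fun k => bb s k * g k) (qq u).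

Lemma qq_abs u : -1/2 < u -> Rabs (qq u) < 1.
Proof.
  intros Hu. unfold qq. rewrite Rabs_div by lra. rewrite (Rabs_pos_eq (1 + u)) by lra.
  apply Rlt_div_l; [lra|]. apply Rabs_def1; lra.
Qed.

Lemma Rpower_m1 x s : 0 < x -> Rpower x (- (s + 1)) = Rpower x (- s) / x.
Proof.
  intros Hx. replace (- (s + 1)) with (- s + Ropp 1) by ring. rewrite Rpower_plus.
  rewrite (Rpower_Ropp x 1), Rpower_1 by auto. unfold Rdiv. auto.
Qed.

Lemma is_derive_Rp s u : 0 < 1 + u ->
  is_derive (fun u => Rpower (1 + u) (- s)) u (- s * Rpower (1 + u) (- s) / (1 + u)).
Proof. intros Hu. unfold Rpower. auto_derive. lra. field. lra. Qed.

Lemma is_derive_qq u : 0 < 1 + u -> is_derive qq u (/ (1 + u) ^ 2).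
Proof. intros Hu. unfold qq. auto_derive. lra. field. lra. Qed.

Lemma nb_ex s g u : 0 < s -> qb g -> -1/2 < u ->
  ex_series (fun k => bb s k * g k * qq u ^ k).
Proof. intros. apply ex_ps. apply nb_rad; auto. apply qq_abs; auto. Qed.

Lemma FF_deriv s g u : 0 < s -> qb g -> -1/2 < u ->
  is_derive (FF s g) u (s * FF (s + 1) (fun k => g (S k) - g k) u).
Proof.
  intros Hs Hg Hu. unfold FF.
  set (q := qq u).
  set (A := fun k => bb s k * g k).
  set (Cc := fun k => bb (s + 1) k * g (S k)).
  set (Dd := fun k => bb (s + 1) k * g k).
  assert (Hs1 : 0 < s + 1) by lra.
  assert (HA : ex_series (fun k => A k * q ^ k)) by (apply nb_ex; auto).
  assert (HC : ex_series (fun k => Cc k * q ^ k)) by (apply nb_ex; auto; apply qb_shift; auto).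
  assert (HD : ex_series (fun k => Dd k * q ^ k)) by (apply nb_ex; auto).
  assert (E1 : PSeries (PS_derive A) q = s * PSeries Cc q).
  { rewrite <- PSeries_scal. apply PSeries_ext. intros k. unfold PS_derive, PS_scal, A, Cc.
    change (scal s (bb (s + 1) k * g (S k))) with (s * (bb (s + 1) k * g (S k))).
    rewrite S_INR. rewrite <- Rmult_assoc, bb_shift. ring. }
  assert (E2 : PSeries A q = PSeries Dd q - q * PSeries Cc q).
  { rewrite <- PSeries_incr_1.
    assert (PSeries (PS_incr_1 Cc) q = PSeries Dd q - PSeries A q).
    { unfold PSeries. rewrite <- Series_minus by auto. apply Series_ext. intros k.
      unfold PS_incr_1, A, Dd, Cc. destruct k.
      - simpl. rewrite !bb_0. assert (Hz : forall t : R, zero * t = 0) by (intros; cbv [zero]; simpl; ring). rewrite Hz. ring.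
      - simpl. rewrite (bb_pascal s k). ring. }
    rewrite H. ring. }
  assert (E3 : PSeries (fun k => bb (s + 1) k * (g (S k) - g k)) q = PSeries Cc q - PSeries Dd q).
  { unfold PSeries. rewrite <- Series_minus by auto. apply Series_ext. intros k.
    unfold Cc, Dd. ring. }
  assert (H1 : is_derive (fun u => Rpower (1 + u) (- s)) u (- s * Rpower (1 + u) (- s) / (1 + u)))
    by (apply is_derive_Rp; lra).
  assert (H2 : is_derive (fun u => PSeries A (qq u)) u (/ (1 + u) ^ 2 * PSeries (PS_derive A) q)).
  { apply (is_derive_comp (PSeries A) qq u). apply is_derive_PSeries. apply nb_rad; auto.
    apply qq_abs; auto. apply is_derive_qq; lra. }
  pose proof (is_derive_mult _ _ u _ _ H1 H2 ltac:(intros; apply Rmult_comm)) as H3.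
  revert H3. match goal with |- is_derive _ _ ?l -> is_derive _ _ ?l' => replace l' with l end.
  { intros H3; exact H3. }
  change (plus ?a ?b) with (a + b). change (mult ?a ?b) with (a * b).
  fold q. rewrite E3, E1, E2, Rpower_m1 by lra.
  unfold q, qq. match goal with |- ?a = ?b => change (@eq R a b) end. field. lra.
Qed.


Lemma Rpower_pos x y : 0 < Rpower x y.
Proof. unfold Rpower; apply exp_pos. Qed.

Lemma Rpower_1l y : Rpower 1 y = 1.
Proof. unfold Rpower. rewrite ln_1, Rmult_0_r, exp_0. auto. Qed.

Lemma ex_pseries_R' (a : nat -> R) x : ex_series (fun k => a k * x ^ k) -> ex_pseries a x.
Proof. intros [l Hl]. exists l. apply is_pseries_R. exact Hl. Qed.

Lemma FF_0 s g : FF s g 0 = g 0%nat.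
Proof. unfold FF, qq. rewrite Rplus_0_r, Rpower_1l. unfold Rdiv. rewrite Rmult_0_l, PSeries_0, bb_0. ring. Qed.

Lemma FF_ext s g h u : (forall k, g k = h k) -> FF s g u = FF s h u.
Proof. intros E. unfold FF. f_equal. apply PSeries_ext. intros; rewrite E; auto. Qed.

Lemma exs_ext (a b : nat -> R) : (forall n, a n = b n) -> ex_series a -> ex_series b.
Proof. apply ex_series_ext. Qed.

Lemma ex_series_mul c (a : nat -> R) : ex_series a -> ex_series (fun n => c * a n).
Proof. intros [l Hl]. exists (c * l). apply (is_series_scal_l c a l Hl). Qed.

Lemma FF_lin s g h a b u : 0 < s -> qb g -> qb h -> -1/2 < u ->
  FF s (fun k => a * g k + b * h k) u = a * FF s g u + b * FF s h u.
Proof.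
  intros Hs Hg Hh Hu. unfold FF, PSeries.
  rewrite (Series_ext _ (fun k => a * (bb s k * g k * qq u ^ k) + b * (bb s k * h k * qq u ^ k)))
    by (intros; ring).
  rewrite Series_plus.
  - rewrite !Series_scal_l. ring.
  - apply ex_series_mul. apply nb_ex; auto.
  - apply ex_series_mul. apply nb_ex; auto.
Qed.

Lemma FF_zero s u : FF s (fun _ => 0) u = 0.
Proof.
  unfold FF. rewrite (PSeries_ext _ (fun _ => 0)) by (intros; ring).
  rewrite PSeries_const_0. ring.
Qed.

Lemma FF_nonneg s g u : 0 < s -> qb g -> 0 <= u -> (forall k, 0 <= g k) -> 0 <= FF s g u.
Proof.
  intros Hs Hg Hu Hp. unfold FF. apply Rmult_le_pos. left; apply Rpower_pos.
  rewrite <- (PSeries_const_0 (qq u)). unfold PSeries. apply Series_le.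
  - intros n. rewrite Rmult_0_l. split. lra. apply Rmult_le_pos.
    apply Rmult_le_pos. left; apply bb_pos; auto. auto.
    apply pow_le. unfold qq. apply Rdiv_le_0_compat; lra.
  - apply nb_ex; auto; lra.
Qed.

Lemma FF_mono s g h u : 0 < s -> qb g -> qb h -> 0 <= u -> (forall k, g k <= h k) ->
  FF s g u <= FF s h u.
Proof.
  intros Hs Hg Hh Hu Hgh.
  assert (0 <= FF s (fun k => 1 * h k + (-1) * g k) u).
  { apply FF_nonneg; auto. apply qb_plus; apply qb_scal; auto. intros k; specialize (Hgh k); lra. }
  rewrite FF_lin in H; auto; lra.
Qed.

Lemma const_deriv (f : R -> R) (d : R) u : 0 <= u ->
  (forall x, 0 <= x -> is_derive f x d) -> f u = f 0 + d * u.
Proof.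
  intros Hu Hd. destruct (Rle_lt_or_eq_dec 0 u Hu) as [Hu'|<-]; [|ring].
  destruct (MVT_cor2 f (fun _ => d) 0 u Hu') as [c [E _]].
  - intros c Hc. apply is_derive_Reals. apply Hd. lra.
  - lra.
Qed.

Lemma FF_one s u : 0 < s -> 0 <= u -> FF s (fun _ => 1) u = 1.
Proof.
  intros Hs Hu. rewrite (const_deriv (FF s (fun _ => 1)) 0 u Hu).
  - rewrite FF_0. ring.
  - intros x Hx. pose proof (FF_deriv s (fun _ => 1) x Hs (qb_const 1) ltac:(lra)) as H.
    rewrite (FF_ext _ _ (fun _ => 0)) in H by (intros; ring).
    rewrite FF_zero, Rmult_0_r in H. exact H.
Qed.

Lemma FF_id s u : 0 < s -> 0 <= u -> FF s INR u = s * u.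
Proof.
  intros Hs Hu. rewrite (const_deriv (FF s INR) s u Hu).
  - rewrite FF_0. simpl. ring.
  - intros x Hx. pose proof (FF_deriv s INR x Hs qb_INR ltac:(lra)) as H.
    rewrite (FF_ext _ _ (fun _ => 1)) in H by (intros; rewrite S_INR; ring).
    rewrite FF_one, Rmult_1_r in H by (auto; lra). exact H.
Qed.

Lemma Rpower_comb x s : 0 < x -> Rpower x (- s) * Rpower x (s - 1) = / x.
Proof.
  intros Hx. rewrite <- Rpower_plus. replace (- s + (s - 1)) with (- (1)) by ring.
  rewrite Rpower_Ropp, Rpower_1; auto.
Qed.

Lemma PS_bb s u : 0 < s -> 0 <= u -> PSeries (bb s) (qq u) = Rpower (1 + u) s.
Proof.
  intros Hs Hu. pose proof (FF_one s u Hs Hu) as H. unfold FF in H.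
  rewrite (PSeries_ext _ (bb s)) in H by (intros; ring).
  rewrite Rpower_Ropp in H. pose proof (Rpower_pos (1 + u) s).
  apply (Rmult_eq_compat_l (Rpower (1 + u) s)) in H. field_simplify in H; lra.
Qed.

Lemma bb_rel s k : 1 < s -> (s - 1) * bb s k = bb (s - 1) k * (s - 1 + INR k).
Proof.
  intros Hs. pose proof (bb_shift (s - 1) k) as H1. replace (s - 1 + 1) with s in H1 by ring.
  pose proof (bb_S (s - 1) k) as H2. pose proof (pos_INR k).
  rewrite <- H1, H2. field. lra.
Qed.

Lemma FF_inv1_le s u : 1 < s -> 0 < u -> FF s (fun k => / (INR k + 1)) u <= / ((s - 1) * u).
Proof.
  intros Hs Hu. unfold FF.
  assert (Ht : forall k, bb s k * / (INR k + 1) = / (s - 1) * PS_decr_1 (bb (s - 1)) k).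
  { intros k. unfold PS_decr_1. pose proof (bb_shift (s - 1) k) as H1.
    replace (s - 1 + 1) with s in H1 by ring. pose proof (pos_INR k).
    apply Rmult_eq_reg_l with ((s - 1) * (INR k + 1)); [|nra].
    replace ((s - 1) * (INR k + 1) * (bb s k * / (INR k + 1))) with ((s - 1) * bb s k) by (field; lra).
    rewrite <- H1. field. lra. }
  rewrite (PSeries_ext _ (PS_scal (/ (s - 1)) (PS_decr_1 (bb (s - 1)))) _ Ht), PSeries_scal.
  assert (Hex : ex_pseries (bb (s - 1)) (qq u)).
  { apply ex_pseries_R'. apply (exs_ext (fun k => bb (s - 1) k * 1 * qq u ^ k)).
    intros; ring. apply nb_ex; try lra. apply qb_const. }
  pose proof (PSeries_decr_1 _ _ Hex) as H. rewrite PS_bb, bb_0 in H by lra.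
  assert (Hq : 0 < qq u) by (unfold qq; apply Rdiv_lt_0_compat; lra).
  assert (E : PSeries (PS_decr_1 (bb (s - 1))) (qq u) = (Rpower (1 + u) (s - 1) - 1) / qq u).
  { rewrite H. field. lra. }
  rewrite E. pose proof (Rpower_comb (1 + u) s ltac:(lra)) as Hc.
  pose proof (Rpower_pos (1 + u) (- s)) as Hp.
  replace (Rpower (1 + u) (- s) * (/ (s - 1) * ((Rpower (1 + u) (s - 1) - 1) / qq u)))
    with ((Rpower (1 + u) (- s) * Rpower (1 + u) (s - 1) - Rpower (1 + u) (- s)) / ((s - 1) * qq u))
    by (field; lra).
  rewrite Hc. unfold qq.
  replace (/ ((s - 1) * u)) with ((/ (1 + u)) / ((s - 1) * (u / (1 + u)))) by (field; lra).
  unfold Rdiv. apply Rmult_le_compat_r.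
  - left. apply Rinv_0_lt_compat. apply Rmult_lt_0_compat; [lra|]. apply Rdiv_lt_0_compat; lra.
  - lra.
Qed.

Lemma FF_invs s u : 1 < s -> 0 <= u -> FF s (fun k => / (s - 1 + INR k)) u = / ((s - 1) * (1 + u)).
Proof.
  intros Hs Hu. unfold FF.
  assert (Ht : forall k, bb s k * / (s - 1 + INR k) = / (s - 1) * bb (s - 1) k).
  { intros k. pose proof (bb_rel s k Hs). pose proof (pos_INR k).
    apply Rmult_eq_reg_l with ((s - 1) * (s - 1 + INR k)); [|nra].
    replace ((s - 1) * (s - 1 + INR k) * (bb s k * / (s - 1 + INR k))) with ((s - 1) * bb s k) by (field; lra).
    rewrite H. field. lra. }
  rewrite (PSeries_ext _ (PS_scal (/ (s - 1)) (bb (s - 1))) _ Ht), PSeries_scal, PS_bb by lra.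
  pose proof (Rpower_comb (1 + u) s ltac:(lra)) as Hc.
  replace (Rpower (1 + u) (- s) * (/ (s - 1) * Rpower (1 + u) (s - 1)))
    with (/ (s - 1) * (Rpower (1 + u) (- s) * Rpower (1 + u) (s - 1))) by ring.
  rewrite Hc. field. lra.
Qed.


Lemma ln_le_sub1 y : 0 < y -> ln y <= y - 1.
Proof.
  intros Hy. pose proof (exp_ineq1_le (y - 1)).
  rewrite <- (ln_exp (y - 1)). apply ln_le; auto. lra.
Qed.

Lemma ln_diff_le a b : 0 < a -> 0 < b -> ln a - ln b <= a / b - 1.
Proof. intros Ha Hb. rewrite <- ln_div by auto. apply ln_le_sub1. apply Rdiv_lt_0_compat; auto. Qed.

Definition gam (r : R) (k : nat) : R := - ln (bb r k).

Lemma ln_bb_bounds r k : 1 <= r -> 0 <= ln (bb r k) <= r * INR k.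
Proof.
  intros Hr. induction k.
  - rewrite bb_0, ln_1. simpl. lra.
  - rewrite bb_S. pose proof (pos_INR k). pose proof (bb_pos r k ltac:(lra)).
    rewrite (ln_div (bb r k * (r + INR k))) by (try apply Rmult_lt_0_compat; lra).
    rewrite ln_mult by lra. rewrite S_INR.
    assert (0 <= ln (r + INR k) - ln (INR k + 1)).
    { assert (ln (INR k + 1) <= ln (r + INR k)) by (apply ln_le; lra). lra. }
    assert (ln (r + INR k) - ln (INR k + 1) <= r).
    { eapply Rle_trans; [apply ln_diff_le; lra|].
      apply Rle_trans with ((r + INR k) / (INR k + 1)); [lra|].
      apply Rle_div_l; [lra|]. nra. }
    lra.
Qed.

Lemma qb_gam r : 1 <= r -> qb (gam r).
Proof.
  intros Hr. exists r. intros k. unfold gam. rewrite Rabs_Ropp.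
  destruct (ln_bb_bounds r k Hr) as [H1 H2]. rewrite Rabs_pos_eq by auto.
  pose proof (pos_INR k). nra.
Qed.

Lemma dgam r k : 0 < r -> gam r (S k) - gam r k = ln (INR k + 1) - ln (r + INR k).
Proof.
  intros Hr. unfold gam. rewrite bb_S. pose proof (pos_INR k). pose proof (bb_pos r k Hr).
  rewrite (ln_div (bb r k * (r + INR k))) by (try apply Rmult_lt_0_compat; lra).
  rewrite ln_mult by lra. ring.
Qed.

Definition PhiNB (r u : R) : R :=
  FF r (gam r) u + (r * (1 + u) * ln (1 + u) - r * (u * ln u)).
Definition dgamf (r : R) (k : nat) : R := gam r (S k) - gam r k.
Definition ddgamf (r : R) (k : nat) : R := dgamf r (S k) - dgamf r k.
Definition dPhiNB (r u : R) : R :=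
  r * FF (r + 1) (dgamf r) u + r * (ln (1 + u) - ln u).
Definition ddPhiNB (r u : R) : R :=
  r * ((r + 1) * FF (r + 1 + 1) (ddgamf r) u) + r * (/ (1 + u) - / u).

Lemma PhiNB_deriv r u : 1 < r -> 0 < u -> is_derive (PhiNB r) u (dPhiNB r u).
Proof.
  intros Hr Hu. unfold PhiNB, dPhiNB.
  apply (is_derive_plus (FF r (gam r)) (fun u => r * (1 + u) * ln (1 + u) - r * (u * ln u))).
  - apply FF_deriv; try lra. apply qb_gam; lra.
  - auto_derive. split; lra. field. lra.
Qed.

Lemma dPhiNB_deriv r u : 1 < r -> 0 < u -> is_derive (dPhiNB r) u (ddPhiNB r u).
Proof.
  intros Hr Hu. unfold dPhiNB, ddPhiNB.
  apply (is_derive_plus (fun u => r * FF (r + 1) (dgamf r) u) (fun u => r * (ln (1 + u) - ln u))).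
  - apply is_derive_scal. apply FF_deriv; try lra. apply qb_diff, qb_gam; lra.
  - auto_derive. split; lra. field. lra.
Qed.

Lemma dPhiNB_pos r u : 1 < r -> 0 < u -> 0 < dPhiNB r u.
Proof.
  intros Hr Hu. unfold dPhiNB.
  set (m := (1 + u) / u).
  assert (Hm : 0 < m) by (unfold m; apply Rdiv_lt_0_compat; lra).
  assert (Hlm : ln m = ln (1 + u) - ln u) by (unfold m; apply ln_div; lra).
  set (A := 1 - ln m - / m). set (B := - ((r - 1) / m)).
  assert (Hle : FF (r + 1) (fun k => A * 1 + B * / (INR k + 1)) u <= FF (r + 1) (dgamf r) u).
  { apply FF_mono; try lra.
    - apply qb_plus; apply qb_scal. apply qb_const. apply qb_bounded with 1. intros k.
      pose proof (pos_INR k). rewrite Rabs_pos_eq. apply Rle_trans with (/1). apply Rinv_le_contravar; lra. lra.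
      left; apply Rinv_0_lt_compat; lra.
    - apply qb_diff, qb_gam; lra.
    - intros k. unfold dgamf. rewrite dgam by lra. pose proof (pos_INR k).
      set (Y := (r + INR k) / (INR k + 1)).
      assert (HY : 0 < Y) by (unfold Y; apply Rdiv_lt_0_compat; lra).
      assert (E : ln (INR k + 1) - ln (r + INR k) = - ln Y) by (unfold Y; rewrite ln_div; lra).
      rewrite E. pose proof (ln_diff_le Y m HY Hm).
      unfold A, B. replace (Y / m) with (/ m * (1 + (r - 1) * / (INR k + 1))) in H0.
      + lra.
      + unfold Y. field. split; lra. }
  rewrite FF_lin in Hle; try lra; try apply qb_const.
  2:{ apply qb_bounded with 1. intros k.
      pose proof (pos_INR k). rewrite Rabs_pos_eq. apply Rle_trans with (/1). apply Rinv_le_contravar; lra. lra.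
      left; apply Rinv_0_lt_compat; lra. }
  rewrite FF_one in Hle by lra.
  pose proof (FF_inv1_le (r + 1) u ltac:(lra) Hu) as Hi.
  replace (r + 1 - 1) with r in Hi by ring.
  assert (HB : B <= 0) by (unfold B; assert (0 <= (r - 1) / m) by (apply Rdiv_le_0_compat; lra); lra).
  assert (B * FF (r + 1) (fun k => / (INR k + 1)) u >= B * / (r * u)).
  { apply Rle_ge. apply Rmult_le_compat_neg_l; auto. }
  assert (Hfin : 0 < A + B * / (r * u) + ln m).
  { unfold A, B, m. field_simplify; try lra.
    apply Rdiv_lt_0_compat. lra. nra. }
  rewrite <- Hlm.
  replace (r * FF (r + 1) (dgamf r) u + r * ln m) with (r * (FF (r + 1) (dgamf r) u + ln m)) by ring.
  apply Rmult_lt_0_compat; lra.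
Qed.

Lemma ddPhiNB_nonpos r u : 1 < r -> 0 < u -> ddPhiNB r u <= 0.
Proof.
  intros Hr Hu. unfold ddPhiNB.
  set (s := r + 1 + 1).
  assert (Hb1 : qb (fun k => / (INR k + 1))).
  { apply qb_bounded with 1. intros k.
    pose proof (pos_INR k). rewrite Rabs_pos_eq. apply Rle_trans with (/1). apply Rinv_le_contravar; lra. lra.
    left; apply Rinv_0_lt_compat; lra. }
  assert (Hb2 : qb (fun k => / (s - 1 + INR k))).
  { apply qb_bounded with (/ (s - 1)). intros k. unfold s.
    pose proof (pos_INR k). rewrite Rabs_pos_eq. apply Rinv_le_contravar; lra.
    left; apply Rinv_0_lt_compat; lra. }
  assert (Hle : FF s (ddgamf r) u <= FF s (fun k => 1 * / (INR k + 1) + (-1) * / (s - 1 + INR k)) u).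
  { apply FF_mono; try (unfold s; lra).
    - apply qb_diff, qb_diff, qb_gam; lra.
    - apply qb_plus; apply qb_scal; auto.
    - intros k. unfold ddgamf, dgamf. rewrite !dgam by lra. rewrite S_INR.
      pose proof (pos_INR k).
      pose proof (ln_diff_le (INR k + 1 + 1) (INR k + 1) ltac:(lra) ltac:(lra)).
      pose proof (ln_diff_le (r + INR k) (r + (INR k + 1)) ltac:(lra) ltac:(lra)).
      unfold s. replace (r + 1 + 1 - 1 + INR k) with (r + (INR k + 1)) by ring.
      replace ((INR k + 1 + 1) / (INR k + 1) - 1) with (/ (INR k + 1)) in H0 by (field; lra).
      replace ((r + INR k) / (r + (INR k + 1)) - 1) with (- / (r + (INR k + 1))) in H1 by (field; lra).
      lra. }
  rewrite FF_lin in Hle; try (unfold s; lra); auto.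
  pose proof (FF_inv1_le s u ltac:(unfold s; lra) Hu) as Hi.
  rewrite FF_invs in Hle by (unfold s; lra; lra).
  unfold s in *. replace (r + 1 + 1 - 1) with (r + 1) in * by ring.
  assert (Hk : (r + 1) * FF (r + 1 + 1) (ddgamf r) u <= / u - / (1 + u)).
  { assert ((r + 1) * FF (r + 1 + 1) (ddgamf r) u <=
            (r + 1) * (1 * / ((r + 1) * u) + -1 * / ((r + 1) * (1 + u)))).
    { apply Rmult_le_compat_l; lra. }
    replace ((r + 1) * (1 * / ((r + 1) * u) + -1 * / ((r + 1) * (1 + u)))) with (/ u - / (1 + u)) in H
      by (field; lra). lra. }
  assert (r * ((r + 1) * FF (r + 1 + 1) (ddgamf r) u) <= r * (/ u - / (1 + u))) by (apply Rmult_le_compat_l; lra).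
  lra.
Qed.


Definition PP (g : nat -> R) (l : R) : R :=
  exp (- l) * PSeries (fun k => g k / INR (fact k)) l.

Lemma lim_zero_ratio : is_lim_seq (fun n => (2 + INR n) / (INR n + 1) * ((2 + INR n) / (INR n + 1)) * / (INR n + 1)) 0.
Proof.
  replace (Finite 0) with (Finite (1 * 1 * 0)) by (f_equal; ring).
  apply is_lim_seq_mult'. apply is_lim_seq_mult'; apply lim_ratio. apply lim_inv_S.
Qed.

Lemma pp_rad g l : qb g -> Rbar_lt (Rabs l) (CV_radius (fun k => g k / INR (fact k))).
Proof.
  intros Hg. destruct (qb_C g Hg) as [C [HC0 HC]].
  set (M := fun k => (INR k + 1) ^ 2 / INR (fact k)).
  apply (rad_gt _ (PS_scal (C + 1) M) l (Rabs l + 1)).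
  - intros n. unfold PS_scal. change (scal (C + 1) (M n)) with ((C + 1) * M n). unfold M.
    pose proof (fact_pos n). pose proof (pos_INR n).
    assert (0 <= (INR n + 1) ^ 2) by (apply pow_le; lra).
    unfold Rdiv. rewrite Rabs_mult, (Rabs_pos_eq (/ INR (fact n))) by (left; apply Rinv_0_lt_compat; lra).
    rewrite (Rabs_pos_eq ((C + 1) * ((INR n + 1) ^ 2 * / INR (fact n)))).
    2:{ apply Rmult_le_pos; [lra|]. apply Rmult_le_pos; [lra|]. left; apply Rinv_0_lt_compat; lra. }
    specialize (HC n). assert (0 < / INR (fact n)) by (apply Rinv_0_lt_compat; lra). nra.
  - apply CV_disk_scal. apply CV_disk_DAlembert with 0.
    + intros n; unfold M. pose proof (fact_pos n). pose proof (pos_INR n).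
      apply Rmult_integral_contrapositive; split. apply pow_nonzero; lra.
      apply Rinv_neq_0_compat; lra.
    + eapply is_lim_seq_ext; [|apply lim_zero_ratio].
      intros n. unfold M. pose proof (fact_pos n). pose proof (pos_INR n).
      change (fact (S n)) with (S n * fact n)%nat. rewrite mult_INR, !S_INR.
      rewrite Rabs_pos_eq.
      * field. repeat split; lra.
      * apply Rle_mult_inv_pos. apply Rle_mult_inv_pos. apply pow_le; lra.
        apply Rmult_lt_0_compat; lra.
        apply Rdiv_lt_0_compat. apply pow_lt; lra. auto.
    + left; auto.
  - rewrite (Rabs_pos_eq (Rabs l + 1)). lra. pose proof (Rabs_pos l). lra.
Qed.

Lemma pp_ex g l : qb g -> ex_series (fun k => g k / INR (fact k) * l ^ k).
Proof. intros. apply ex_ps. apply pp_rad; auto. Qed.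

Lemma PP_deriv g l : qb g -> is_derive (PP g) l (PP (fun k => g (S k) - g k) l).
Proof.
  intros Hg. unfold PP.
  set (A := fun k => g k / INR (fact k)).
  set (Cc := fun k => g (S k) / INR (fact k)).
  assert (HA : ex_series (fun k => A k * l ^ k)) by (apply pp_ex; auto).
  assert (HC : ex_series (fun k => Cc k * l ^ k)) by (apply pp_ex; apply qb_shift; auto).
  assert (E1 : PSeries (PS_derive A) l = PSeries Cc l).
  { apply PSeries_ext. intros k. unfold PS_derive, A, Cc. pose proof (fact_pos k).
    change (fact (S k)) with (S k * fact k)%nat. rewrite mult_INR. pose proof (pos_INR k).
    rewrite S_INR. field. lra. }
  assert (E3 : PSeries (fun k => (g (S k) - g k) / INR (fact k)) l = PSeries Cc l - PSeries A l).
  { unfold PSeries. rewrite <- Series_minus by auto. apply Series_ext. intros k.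
    unfold Cc, A. pose proof (fact_pos k). field. lra. }
  assert (H1 : is_derive (fun l => exp (- l)) l (- exp (- l))) by (auto_derive; auto; ring).
  assert (H2 : is_derive (PSeries A) l (PSeries (PS_derive A) l)).
  { apply is_derive_PSeries. apply pp_rad; auto. }
  pose proof (is_derive_mult _ _ l _ _ H1 H2 ltac:(intros; apply Rmult_comm)) as H3.
  revert H3. match goal with |- is_derive _ _ ?v -> is_derive _ _ ?v' => replace v' with v end.
  { intros H3; exact H3. }
  change (plus ?a ?b) with (a + b). change (mult ?a ?b) with (a * b).
  rewrite E3, E1. match goal with |- ?a = ?b => change (@eq R a b) end. ring.
Qed.

Lemma PP_0 g : PP g 0 = g 0%nat.
Proof. unfold PP. rewrite Ropp_0, exp_0, PSeries_0. simpl. field. Qed.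

Lemma PP_ext g h l : (forall k, g k = h k) -> PP g l = PP h l.
Proof. intros E. unfold PP. f_equal. apply PSeries_ext. intros; rewrite E; auto. Qed.

Lemma PP_lin g h a b l : qb g -> qb h ->
  PP (fun k => a * g k + b * h k) l = a * PP g l + b * PP h l.
Proof.
  intros Hg Hh. unfold PP, PSeries.
  rewrite (Series_ext _ (fun k => a * (g k / INR (fact k) * l ^ k) + b * (h k / INR (fact k) * l ^ k))).
  2:{ intros. pose proof (fact_pos n). field. lra. }
  rewrite Series_plus.
  - rewrite !Series_scal_l. ring.
  - apply ex_series_mul. apply pp_ex; auto.
  - apply ex_series_mul. apply pp_ex; auto.
Qed.

Lemma PP_zero l : PP (fun _ => 0) l = 0.
Proof.
  unfold PP. rewrite (PSeries_ext _ (fun _ => 0)).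
  rewrite PSeries_const_0. ring. intros; unfold Rdiv; ring.
Qed.

Lemma PP_mono g h l : qb g -> qb h -> 0 <= l -> (forall k, g k <= h k) -> PP g l <= PP h l.
Proof.
  intros Hg Hh Hl Hgh.
  assert (0 <= PP (fun k => 1 * h k + (-1) * g k) l).
  { unfold PP. apply Rmult_le_pos. left; apply exp_pos.
    rewrite <- (PSeries_const_0 l). unfold PSeries. apply Series_le.
    - intros n. rewrite Rmult_0_l. split. lra. apply Rmult_le_pos.
      apply Rdiv_le_0_compat. specialize (Hgh n); lra. apply fact_pos. apply pow_le; auto.
    - apply pp_ex. apply qb_plus; apply qb_scal; auto. }
  rewrite PP_lin in H; auto; lra.
Qed.

Lemma PP_one l : 0 <= l -> PP (fun _ => 1) l = 1.
Proof.
  intros Hl. rewrite (const_deriv (PP (fun _ => 1)) 0 l Hl).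
  - rewrite PP_0. ring.
  - intros x Hx. pose proof (PP_deriv (fun _ => 1) x (qb_const 1)) as H.
    rewrite (PP_ext _ (fun _ => 0)) in H by (intros; ring).
    rewrite PP_zero in H. exact H.
Qed.

Lemma PP_id l : 0 <= l -> PP INR l = l.
Proof.
  intros Hl. rewrite (const_deriv (PP INR) 1 l Hl).
  - rewrite PP_0. simpl. ring.
  - intros x Hx. pose proof (PP_deriv INR x qb_INR) as H.
    rewrite (PP_ext _ (fun _ => 1)) in H by (intros; rewrite S_INR; ring).
    rewrite PP_one in H by auto. exact H.
Qed.

Lemma PP_inv1 l : 0 < l -> l * PP (fun k => / (INR k + 1)) l = 1 - exp (- l).
Proof.
  intros Hl. unfold PP.
  assert (Ht : forall k, / (INR k + 1) / INR (fact k) = PS_decr_1 (fun k => / INR (fact k)) k).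
  { intros k. unfold PS_decr_1. change (fact (S k)) with (S k * fact k)%nat.
    rewrite mult_INR, S_INR. pose proof (fact_pos k). pose proof (pos_INR k). field. lra. }
  rewrite (PSeries_ext _ _ _ Ht).
  assert (Hex : ex_pseries (fun k => / INR (fact k)) l).
  { apply ex_pseries_R'. apply (exs_ext (fun k => 1 / INR (fact k) * l ^ k)).
    intros; unfold Rdiv; ring. apply pp_ex. apply qb_const. }
  pose proof (PSeries_decr_1 _ _ Hex) as H. simpl in H.
  assert (Hexp : PSeries (fun k => / INR (fact k)) l = exp l).
  { pose proof (PP_one l ltac:(lra)) as H1. unfold PP in H1.
    rewrite (PSeries_ext _ (fun k => / INR (fact k))) in H1 by (intros; unfold Rdiv; ring).
    rewrite exp_Ropp in H1. pose proof (exp_pos l).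
    apply (Rmult_eq_compat_l (exp l)) in H1. field_simplify in H1; lra. }
  rewrite Hexp in H. rewrite exp_Ropp. pose proof (exp_pos l).
  replace (l * (/ exp l * PSeries (PS_decr_1 (fun k => / INR (fact k))) l))
    with (/ exp l * (l * PSeries (PS_decr_1 (fun k => / INR (fact k))) l)) by ring.
  assert (l * PSeries (PS_decr_1 (fun k => / INR (fact k))) l = exp l - 1) by lra.
  rewrite H1. field. lra.
Qed.

Lemma qb_inv1 : qb (fun k => / (INR k + 1)).
Proof.
  apply qb_bounded with 1. intros k.
  pose proof (pos_INR k). rewrite Rabs_pos_eq. apply Rle_trans with (/1). apply Rinv_le_contravar; lra. lra.
  left; apply Rinv_0_lt_compat; lra.
Qed.

Definition del (k : nat) : R := ln (INR (fact k)).
Definition ddel (k : nat) : R := del (S k) - del k.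
Definition dddel (k : nat) : R := ddel (S k) - ddel k.

Lemma ddel_eq k : ddel k = ln (INR k + 1).
Proof.
  unfold ddel, del. change (fact (S k)) with (S k * fact k)%nat. rewrite mult_INR, S_INR.
  pose proof (fact_pos k). pose proof (pos_INR k). rewrite ln_mult by lra. ring.
Qed.

Lemma qb_del : qb del.
Proof.
  exists 1. intros k. induction k.
  - unfold del. simpl. rewrite ln_1, Rabs_R0. lra.
  - pose proof (ddel_eq k) as E. unfold ddel in E. pose proof (pos_INR k).
    assert (0 <= del k).
    { unfold del. rewrite <- ln_1. apply ln_le. lra. apply (le_INR 1). apply lt_O_fact. }
    assert (0 <= ln (INR k + 1)) by (rewrite <- ln_1; apply ln_le; lra).
    assert (ln (INR k + 1) <= INR k) by (pose proof (ln_le_sub1 (INR k + 1)); lra).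
    rewrite Rabs_pos_eq in * by lra. rewrite S_INR. nra.
Qed.

Definition PhiP (l : R) : R := PP del l + (l - l * ln l).
Definition dPhiP (l : R) : R := PP ddel l + - ln l.
Definition ddPhiP (l : R) : R := PP dddel l + - / l.

Lemma PhiP_deriv l : 0 < l -> is_derive PhiP l (dPhiP l).
Proof.
  intros Hl. unfold PhiP, dPhiP.
  apply (is_derive_plus (PP del) (fun l => l - l * ln l)).
  - apply PP_deriv. apply qb_del.
  - auto_derive. auto. field. lra.
Qed.

Lemma dPhiP_deriv l : 0 < l -> is_derive dPhiP l (ddPhiP l).
Proof.
  intros Hl. unfold dPhiP, ddPhiP.
  apply (is_derive_plus (PP ddel) (fun l => - ln l)).
  - apply PP_deriv. apply qb_diff, qb_del.
  - auto_derive. auto. field. lra.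
Qed.

Lemma dPhiP_pos l : 0 < l -> 0 < dPhiP l.
Proof.
  intros Hl. unfold dPhiP.
  assert (Hle : PP (fun k => (ln l + 1) * 1 + (- l) * / (INR k + 1)) l <= PP ddel l).
  { apply PP_mono; try lra.
    - apply qb_plus; apply qb_scal. apply qb_const. apply qb_inv1.
    - apply qb_diff, qb_del.
    - intros k. rewrite ddel_eq. pose proof (pos_INR k).
      pose proof (ln_diff_le l (INR k + 1) Hl ltac:(lra)). unfold Rdiv in H0. lra. }
  rewrite PP_lin, PP_one in Hle by (try lra; try apply qb_const; apply qb_inv1).
  pose proof (PP_inv1 l Hl). pose proof (exp_pos (- l)). nra.
Qed.

Lemma ddPhiP_nonpos l : 0 < l -> ddPhiP l <= 0.
Proof.
  intros Hl. unfold ddPhiP.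
  assert (Hle : PP dddel l <= PP (fun k => / (INR k + 1)) l).
  { apply PP_mono; try lra.
    - apply qb_diff, qb_diff, qb_del.
    - apply qb_inv1.
    - intros k. unfold dddel. rewrite !ddel_eq, S_INR. pose proof (pos_INR k).
      pose proof (ln_diff_le (INR k + 1 + 1) (INR k + 1) ltac:(lra) ltac:(lra)).
      replace ((INR k + 1 + 1) / (INR k + 1) - 1) with (/ (INR k + 1)) in H0 by (field; lra).
      lra. }
  pose proof (PP_inv1 l Hl). pose proof (exp_pos (- l)).
  assert (PP (fun k => / (INR k + 1)) l <= / l).
  { apply Rmult_le_reg_l with l; auto. rewrite Rinv_r by lra. lra. }
  lra.
Qed.


Lemma rc0_ext f g : (forall x, f x = g x) -> rc0 f -> rc0 g.
Proof.
  intros E H eps He. destruct (H eps He) as [d [Hd H']]. exists d; split; auto.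
  intros x Hx. rewrite <- !E. auto.
Qed.

Lemma rc0_cont f : continuity_pt f 0 -> rc0 f.
Proof.
  intros H eps He. destruct (cont_eps f 0 H eps He) as [d [Hd H']]. exists d; split; auto.
  intros x Hx. apply H'. rewrite Rminus_0_r, Rabs_pos_eq; lra.
Qed.

Lemma rc0_plus f g : rc0 f -> rc0 g -> rc0 (fun x => f x + g x).
Proof.
  intros Hf Hg eps He. destruct (Hf (eps/2) ltac:(lra)) as [d1 [Hd1 H1]].
  destruct (Hg (eps/2) ltac:(lra)) as [d2 [Hd2 H2]].
  exists (Rmin d1 d2). split. apply Rmin_glb_lt; auto.
  intros x Hx. pose proof (Rmin_l d1 d2). pose proof (Rmin_r d1 d2).
  specialize (H1 x ltac:(lra)). specialize (H2 x ltac:(lra)).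
  replace (f x + g x - (f 0 + g 0)) with ((f x - f 0) + (g x - g 0)) by ring.
  eapply Rle_lt_trans; [apply Rabs_triang|]. lra.
Qed.

Lemma rc0_scal a f : rc0 f -> rc0 (fun x => a * f x).
Proof.
  intros Hf eps He. destruct (Hf (eps / (Rabs a + 1))) as [d [Hd H]].
  { apply Rdiv_lt_0_compat; auto. pose proof (Rabs_pos a); lra. }
  exists d; split; auto. intros x Hx. specialize (H x Hx).
  replace (a * f x - a * f 0) with (a * (f x - f 0)) by ring. rewrite Rabs_mult.
  pose proof (Rabs_pos a). pose proof (Rabs_pos (f x - f 0)).
  apply Rle_lt_trans with ((Rabs a + 1) * Rabs (f x - f 0)). nra.
  apply Rmult_lt_reg_l with (/ (Rabs a + 1)). apply Rinv_0_lt_compat; lra.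
  replace (/ (Rabs a + 1) * ((Rabs a + 1) * Rabs (f x - f 0))) with (Rabs (f x - f 0)) by (field; lra).
  replace (/ (Rabs a + 1) * eps) with (eps / (Rabs a + 1)) by (field; lra). auto.
Qed.

Lemma rc0_xlnx : rc0 (fun u => u * ln u).
Proof.
  intros eps He. exists (Rmin 1 ((eps / 2) ^ 2)). split.
  { apply Rmin_glb_lt. lra. apply pow_lt; lra. }
  intros x Hx. pose proof (Rmin_l 1 ((eps / 2) ^ 2)). pose proof (Rmin_r 1 ((eps / 2) ^ 2)).
  rewrite Rmult_0_l, Rminus_0_r.
  destruct (Rle_lt_or_eq_dec 0 x (proj1 Hx)) as [Hx0|<-].
  2:{ rewrite Rmult_0_l, Rabs_R0; auto. }
  set (t := sqrt x). assert (Ht : 0 < t) by (apply sqrt_lt_R0; auto).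
  assert (Htt : t * t = x) by (apply sqrt_sqrt; lra).
  assert (Hlx : ln x = 2 * ln t) by (rewrite <- Htt, ln_mult by auto; ring).
  assert (Hln : - ln t <= / t - 1).
  { rewrite <- ln_Rinv by auto. apply ln_le_sub1. apply Rinv_0_lt_compat; auto. }
  assert (Hl0 : ln x <= 0).
  { rewrite <- ln_1. apply ln_le; lra. }
  assert (Hte : t < eps / 2).
  { destruct (Rlt_or_le t (eps / 2)) as [H1|H1]; auto. exfalso.
    assert ((eps / 2) ^ 2 <= x) by (rewrite <- Htt; simpl; nra). lra. }
  rewrite Rabs_left1 by (apply Rmult_le_0_l; lra).
  rewrite Hlx. rewrite <- Htt.
  assert (t * t * (- ln t) <= t * t * (/ t - 1)) by (apply Rmult_le_compat_l; nra).
  replace (t * t * (/ t - 1)) with (t - t * t) in H1 by (field; lra).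
  nra.
Qed.

Lemma cont_of_derive f x l : is_derive f x l -> continuity_pt f x.
Proof.
  intros H. apply derivable_continuous_pt. exists l. apply is_derive_Reals; auto.
Qed.

Lemma rc0_PhiNB r : 1 < r -> rc0 (PhiNB r).
Proof.
  intros Hr.
  apply (rc0_ext (fun u => (FF r (gam r) u + r * (1 + u) * ln (1 + u)) + (- r) * (u * ln u))).
  { intros; unfold PhiNB; ring. }
  apply rc0_plus; [| apply rc0_scal, rc0_xlnx].
  apply rc0_cont. apply (cont_of_derive _ _ (r * FF (r + 1) (dgamf r) 0 + (r * ln (1 + 0) + r))).
  apply (is_derive_plus (FF r (gam r)) (fun u => r * (1 + u) * ln (1 + u))).
  - apply FF_deriv; try lra. apply qb_gam; lra.
  - auto_derive. lra. field.
Qed.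

Lemma rc0_PhiP : rc0 PhiP.
Proof.
  apply (rc0_ext (fun l => (PP del l + l) + (-1) * (l * ln l))).
  { intros; unfold PhiP; ring. }
  apply rc0_plus; [| apply rc0_scal, rc0_xlnx].
  apply rc0_cont. apply (cont_of_derive _ _ (PP ddel 0 + 1)).
  apply (is_derive_plus (PP del) (fun l => l)).
  - apply PP_deriv, qb_del.
  - auto_derive. auto. ring.
Qed.


Lemma is_series_zero : is_series (fun _ : nat => 0) 0.
Proof.
  apply is_series_Reals. intros eps He. exists 0%nat. intros n Hn.
  rewrite sum_cte, Rmult_0_l. unfold Rdist. rewrite Rminus_0_r, Rabs_R0. lra.
Qed.

Lemma falling_rising r k : (-1) ^ k * falling (- r) k = rising r k.
Proof.
  induction k; simpl. ring. rewrite <- IHk. ring.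
Qed.

Lemma p_nk_NB c n k x : 0 < c -> 0 <= x ->
  p_nk c n k x = Rpower (1 + c * x) (- (n / c)) * (bb (n / c) k * qq (c * x) ^ k).
Proof.
  intros Hc Hx. unfold p_nk. destruct (Rlt_dec 0 c) as [_|H]; [|lra].
  unfold gbinom. replace (- n / c) with (- (n / c)) by (field; lra).
  set (r := n / c). set (u := c * x).
  assert (Hu : 0 <= u) by (unfold u; nra).
  replace (- r - INR k) with (- r + - INR k) by ring. rewrite Rpower_plus.
  rewrite (Rpower_Ropp (1 + u) (INR k)), Rpower_pow by lra.
  unfold qq, Rdiv. rewrite Rpow_mult_distr, pow_inv.
  unfold bb. rewrite <- falling_rising.
  pose proof (fact_pos k). assert (0 < (1 + u) ^ k) by (apply pow_lt; lra).
  field. split; lra.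
Qed.

Lemma p_nk_P n k x : p_nk 0 n k x = exp (- (n * x)) * (/ INR (fact k) * (n * x) ^ k).
Proof.
  unfold p_nk. destruct (Rlt_dec 0 0) as [H|_]; [lra|].
  replace (- n * x) with (- (n * x)) by ring. unfold Rdiv. ring.
Qed.

Lemma xlogx_pos p : 0 < p -> xlogx p = p * ln p.
Proof. intros Hp. unfold xlogx. destruct (Rle_dec p 0); [lra|auto]. Qed.

Lemma xlogx_1 : xlogx 1 = 0.
Proof. rewrite xlogx_pos by lra. rewrite ln_1. ring. Qed.

Lemma xlogx_0 : xlogx 0 = 0.
Proof. unfold xlogx. destruct (Rle_dec 0 0); [auto|lra]. Qed.

Lemma ent_zero c n k : 0 <= c -> ent_term c n 0 k = 0.
Proof.
  intros Hc. unfold ent_term.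
  destruct (Rle_lt_or_eq_dec 0 c Hc) as [Hc'|<-].
  - rewrite p_nk_NB by lra. rewrite Rmult_0_r, Rplus_0_r, Rpower_1l. unfold qq.
    replace (0 / (1 + 0)) with 0 by (field; lra).
    destruct k. { simpl. rewrite bb_0. match goal with |- - xlogx ?p = 0 => replace p with 1 by ring end.
      rewrite xlogx_1. ring. }
    simpl. match goal with |- - xlogx ?p = 0 => replace p with 0 by ring end. rewrite xlogx_0. ring.
  - rewrite p_nk_P. rewrite Rmult_0_r, Ropp_0, exp_0.
    destruct k. { simpl. match goal with |- - xlogx ?p = 0 => replace p with 1 by (field; lra) end.
      rewrite xlogx_1. ring. }
    simpl. match goal with |- - xlogx ?p = 0 => replace p with 0 by ring end. rewrite xlogx_0. ring.
Qed.

Lemma is_series_lin3 (X Y Z : nat -> R) lx ly lz a b :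
  is_series X lx -> is_series Y ly -> is_series Z lz ->
  is_series (fun k => X k + a * Y k + b * Z k) (lx + a * ly + b * lz).
Proof.
  intros HX HY HZ.
  apply (is_series_plus _ _ _ _ (is_series_plus _ _ _ _ HX (is_series_scal_l a _ _ HY))
            (is_series_scal_l b _ _ HZ)).
Qed.

Lemma is_series_FF s g u : 0 < s -> qb g -> 0 <= u ->
  is_series (fun k => Rpower (1 + u) (- s) * (bb s k * g k * qq u ^ k)) (FF s g u).
Proof.
  intros Hs Hg Hu. unfold FF, PSeries.
  pose proof (is_series_scal_l (Rpower (1 + u) (- s)) _ _ (Series_correct _ (nb_ex s g u Hs Hg ltac:(lra)))) as H.
  exact H.
Qed.

Lemma is_series_PP g l : qb g ->
  is_series (fun k => exp (- l) * (g k / INR (fact k) * l ^ k)) (PP g l).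
Proof.
  intros Hg. unfold PP, PSeries.
  pose proof (is_series_scal_l (exp (- l)) _ _ (Series_correct _ (pp_ex g l Hg))) as H.
  exact H.
Qed.

Lemma PhiNB_0 r : PhiNB r 0 = 0.
Proof. unfold PhiNB. rewrite FF_0. unfold gam. rewrite bb_0, Rplus_0_r, ln_1. ring. Qed.

Lemma PhiP_0 : PhiP 0 = 0.
Proof. unfold PhiP. rewrite PP_0. unfold del. simpl. rewrite ln_1. ring. Qed.

Lemma series_NB c n x : 0 < c -> c < n -> 0 <= x ->
  is_series (ent_term c n x) (PhiNB (n / c) (c * x)).
Proof.
  intros Hc Hn Hx.
  assert (Hr : 1 < n / c) by (apply Rlt_div_r; lra).
  destruct (Rle_lt_or_eq_dec 0 x Hx) as [Hx'|<-].
  2:{ rewrite Rmult_0_r, PhiNB_0. apply (is_series_ext (fun _ => 0)).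
      intros k; rewrite ent_zero; auto; lra. apply is_series_zero. }
  set (r := n / c) in *. set (u := c * x).
  assert (Hu : 0 < u) by (unfold u; nra).
  set (E := Rpower (1 + u) (- r)).
  pose proof (is_series_lin3 _ _ _ _ _ _ (ln (1 + u) - ln u) (r * ln (1 + u))
    (is_series_FF r (gam r) u ltac:(lra) (qb_gam r ltac:(lra)) ltac:(lra))
    (is_series_FF r INR u ltac:(lra) qb_INR ltac:(lra))
    (is_series_FF r (fun _ => 1) u ltac:(lra) (qb_const 1) ltac:(lra))) as HS.
  rewrite FF_id, FF_one in HS by lra.
  replace (PhiNB r u) with
    (FF r (gam r) u + (ln (1 + u) - ln u) * (r * u) + r * ln (1 + u) * 1)
    by (unfold PhiNB; ring).
  revert HS. apply is_series_ext. intros k.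
  unfold ent_term. rewrite p_nk_NB by lra. fold r u E.
  assert (HE : 0 < E) by apply Rpower_pos.
  assert (HB : 0 < bb r k) by (apply bb_pos; lra).
  assert (HQ : 0 < qq u) by (unfold qq; apply Rdiv_lt_0_compat; lra).
  assert (HQk : 0 < qq u ^ k) by (apply pow_lt; auto).
  rewrite xlogx_pos by (apply Rmult_lt_0_compat; auto; apply Rmult_lt_0_compat; auto).
  rewrite !ln_mult by (auto; apply Rmult_lt_0_compat; auto).
  unfold E. rewrite ln_Rpower. rewrite ln_pow by auto. unfold qq. rewrite ln_div by lra.
  unfold gam. fold E. match goal with |- ?a = ?b => change (@eq R a b) end. ring.
Qed.

Lemma series_P n x : 0 < n -> 0 <= x -> is_series (ent_term 0 n x) (PhiP (n * x)).
Proof.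
  intros Hn Hx.
  destruct (Rle_lt_or_eq_dec 0 x Hx) as [Hx'|<-].
  2:{ rewrite Rmult_0_r, PhiP_0. apply (is_series_ext (fun _ => 0)).
      intros k; rewrite ent_zero; auto; lra. apply is_series_zero. }
  set (l := n * x). assert (Hl : 0 < l) by (unfold l; nra).
  pose proof (is_series_lin3 _ _ _ _ _ _ l (- ln l)
    (is_series_PP del l qb_del)
    (is_series_PP (fun _ => 1) l (qb_const 1))
    (is_series_PP INR l qb_INR)) as HS.
  rewrite PP_id, PP_one in HS by lra.
  replace (PhiP l) with (PP del l + l * 1 + - ln l * l) by (unfold PhiP; ring).
  revert HS. apply is_series_ext. intros k.
  unfold ent_term. rewrite p_nk_P. fold l.
  pose proof (fact_pos k). assert (0 < l ^ k) by (apply pow_lt; auto).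
  assert (0 < / INR (fact k)) by (apply Rinv_0_lt_compat; auto).
  pose proof (exp_pos (- l)).
  rewrite xlogx_pos by (apply Rmult_lt_0_compat; auto; apply Rmult_lt_0_compat; auto).
  rewrite !ln_mult by (auto; apply Rmult_lt_0_compat; auto).
  rewrite ln_exp, ln_Rinv, ln_pow by auto. unfold del. unfold Rdiv. match goal with |- ?a = ?b => change (@eq R a b) end. ring.
Qed.


Lemma transfer (Hf : R -> R) (Phi : R -> R) a :
  0 < a ->
  (forall x, 0 <= x -> Hf x = Phi (a * x)) ->
  ((forall x y t, 0 <= x -> 0 <= y -> 0 <= t <= 1 ->
     t * Phi x + (1 - t) * Phi y <= Phi (t * x + (1 - t) * y)) /\
   (forall x y, 0 <= x -> x < y -> Phi x < Phi y)) ->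
  (forall x y t, 0 <= x -> 0 <= y -> 0 <= t <= 1 ->
     t * Hf x + (1 - t) * Hf y <= Hf (t * x + (1 - t) * y)) /\
  (forall x y, 0 <= x -> x < y -> Hf x < Hf y).
Proof.
  intros Ha HE [Hc Hm]. split.
  - intros x y t Hx Hy Ht. rewrite !HE by nra.
    replace (a * (t * x + (1 - t) * y)) with (t * (a * x) + (1 - t) * (a * y)) by ring.
    apply Hc; nra.
  - intros x y Hx Hxy. rewrite !HE by lra. apply Hm; nra.
Qed.

Theorem theorem2p1 (c n : R) (hc : 0 <= c) (hn : c < n) :
  (forall x, 0 <= x -> ex_series (ent_term c n x)) /\
  (forall x y t, 0 <= x -> 0 <= y -> 0 <= t <= 1 ->
     t * H_ent c n x + (1 - t) * H_ent c n y <= H_ent c n (t * x + (1 - t) * y)) /\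
  (forall x y, 0 <= x -> x < y -> H_ent c n x < H_ent c n y).
Proof.
  destruct (Rle_lt_or_eq_dec 0 c hc) as [Hc|<-].
  - assert (Hr : 1 < n / c) by (apply Rlt_div_r; lra).
    split.
    { intros x Hx. eexists. apply series_NB; auto. }
    apply (transfer (H_ent c n) (PhiNB (n / c)) c Hc).
    { intros x Hx. unfold H_ent. apply is_series_unique. apply series_NB; auto. }
    apply (conc_incr _ (dPhiNB (n / c)) (ddPhiNB (n / c))).
    + intros x Hx. apply is_derive_Reals. apply PhiNB_deriv; auto.
    + intros x Hx. apply is_derive_Reals. apply dPhiNB_deriv; auto.
    + intros x Hx. apply ddPhiNB_nonpos; auto.
    + intros x Hx. apply dPhiNB_pos; auto.
    + apply rc0_PhiNB; auto.
  - assert (Hn : 0 < n) by lra.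
    split.
    { intros x Hx. eexists. apply series_P; auto. }
    apply (transfer (H_ent 0 n) PhiP n Hn).
    { intros x Hx. unfold H_ent. apply is_series_unique. apply series_P; auto. }
    apply (conc_incr _ dPhiP ddPhiP).
    + intros x Hx. apply is_derive_Reals. apply PhiP_deriv; auto.
    + intros x Hx. apply is_derive_Reals. apply dPhiP_deriv; auto.
    + intros x Hx. apply ddPhiP_nonpos; auto.
    + intros x Hx. apply dPhiP_pos; auto.
    + apply rc0_PhiP.
Qed.
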